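(* Let $L>0$, $\mu\in(-\infty,0]$, $\Delta>0$, $N\ge1$, step sizes $h_0,\dots,h_{N-1}$, and $\mathcal{I}^*=\{0,\dots,N,*\}$. The optimal value of the problem $$\max_{f\in\mathcal{F}_{\mu,L}(\mathbb{R}^d),\,x_0\in\mathbb{R}^d}\ \min_{0\le i\le N}\|\nabla f(x_i)\|^2\ \text{ s.t. } x_{i+1}=x_i-\tfrac{h_i}{L}\nabla f(x_i)\ (0\le i\le N-1),\ f(x_0)-f_*\le\Delta,$$ where $f_*$ denotes the global minimum value of $f$, equals the optimal value of the finite-dimensional problem $$\max_{\{(x_i,g_i,f_i)\}_{i\in\mathcal{I}^*}}\ \min_{0\le i\le N}\|g_i\|^2\ \text{ s.t. } \text{(IC) holds for all } i,j\in\mathcal{I}^*,\ x_{i+1}=x_i-\tfrac{h_i}{L}g_i\ (0\le i\le N-1),$$ $$f_i-\tfrac{1}{2L}\|g_i\|^2-f_*\ge0\ (0\le i\le N),\quad f_0-f_*\le\Delta,$$ where $(x_*,g_*,f_* )$ is the triplet with index $*$ and (IC) is the inequality $$f_i-f_j-\langle g_j,x_i-x_j\rangle\ge\frac{1}{2(1-\mu/L)}\Big(\frac1L\|g_i-g_j\|^2+\mu\|x_i-x_j\|^2-2\frac{\mu}{L}\langle g_j-g_i,x_j-x_i\rangle\Big).$$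
   Context: For $L>0$ and $\mu\le L$, $\mathcal{F}_{\mu,L}(\mathbb{R}^d)$ denotes the class of differentiable functions $f:\mathbb{R}^d\to\mathbb{R}$ such that both $\frac L2\|\cdot\|^2-f$ and $f-\frac{\mu}{2}\|\cdot\|^2$ are convex. *)

(* Defs.v *)
From mathcomp Require Import all_boot all_order all_algebra.
From mathcomp Require Import all_classical all_reals all_analysis.
Set Implicit Arguments. Unset Strict Implicit. Unset Printing Implicit Defensive.
Import Order.TTheory GRing.Theory Num.Theory.
Import numFieldNormedType.Exports.
Local Open Scope ring_scope.

Definition dotp (R : realType) (d : nat) (u v : 'rV[R]_d) : R :=
  \sum_(k < d) u ord0 k * v ord0 k.

Definition sqnorm (R : realType) (d : nat) (u : 'rV[R]_d) : R := dotp u u.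

Definition is_gradient (R : realType) (d : nat) (f : 'rV[R]_d -> R)
  (g : 'rV[R]_d -> 'rV[R]_d) : Prop :=
  forall x, differentiable f x /\ forall v, ('d f x : 'rV[R]_d -> R) v = dotp (g x) v.

Definition convex_fun (R : realType) (d : nat) (f : 'rV[R]_d -> R) : Prop :=
  forall (x y : 'rV[R]_d) (t : R), 0 <= t -> t <= 1 ->
    f (t *: x + (1 - t) *: y) <= t * f x + (1 - t) * f y.

Definition in_F (R : realType) (d : nat) (mu L : R) (f : 'rV[R]_d -> R)
  (g : 'rV[R]_d -> 'rV[R]_d) : Prop :=
  is_gradient f g /\
  convex_fun (fun x => L / 2 * sqnorm x - f x) /\
  convex_fun (fun x => f x - mu / 2 * sqnorm x).

Definition min_upto (R : realType) (N : nat) (v : nat -> R) : R :=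
  \big[Num.min/v 0%N]_(i < N.+1) v i.

Definition IC (R : realType) (d : nat) (mu L : R)
  (xi gi : 'rV[R]_d) (fi : R) (xj gj : 'rV[R]_d) (fj : R) : Prop :=
  fi - fj - dotp gj (xi - xj) >=
  1 / (2 * (1 - mu / L)) *
    (1 / L * sqnorm (gi - gj) + mu * sqnorm (xi - xj)
     - 2 * (mu / L) * dotp (gj - gi) (xj - xi)).

Definition values_fun (R : realType) (d : nat) (mu L Delta : R) (N : nat)
  (h : nat -> R) : set R :=
  [set r | exists (f : 'rV[R]_d -> R) (g : 'rV[R]_d -> 'rV[R]_d)
             (x : nat -> 'rV[R]_d) (xs : 'rV[R]_d),
     [/\ in_F mu L f g,
         (* xs is a global minimizer, so f_* = f xs *)
         (forall y, f xs <= f y),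
         (forall i, (i < N)%N -> x i.+1 = x i - (h i / L) *: g (x i)),
         f (x 0%N) - f xs <= Delta &
         r = min_upto N (fun i => sqnorm (g (x i)))]].

(* Index set I* = {0,...,N,*}, encoded as option nat with None = *. *)
Definition in_Istar (N : nat) (o : option nat) : bool :=
  if o is Some i then (i <= N)%N else true.

Definition values_pep (R : realType) (d : nat) (mu L Delta : R) (N : nat)
  (h : nat -> R) : set R :=
  [set r | exists (X G : option nat -> 'rV[R]_d) (F : option nat -> R),
     [/\ (forall i j, in_Istar N i -> in_Istar N j ->
            IC mu L (X i) (G i) (F i) (X j) (G j) (F j)),
         (forall i, (i < N)%N ->
            X (Some i.+1) = X (Some i) - (h i / L) *: G (Some i)),
         (forall i, (i <= N)%N ->
            F (Some i) - 1 / (2 * L) * sqnorm (G (Some i)) - F None >= 0),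
         F (Some 0%N) - F None <= Delta &
         r = min_upto N (fun i => sqnorm (G (Some i)))]].

(* Main.v *)
Require Import Defs.
From HB Require Import structures.
From mathcomp Require Import all_boot all_order all_algebra.
From mathcomp Require Import all_classical all_reals all_analysis.
From mathcomp Require Import ring lra.
Set Implicit Arguments. Unset Strict Implicit. Unset Printing Implicit Defensive.
Import Order.TTheory GRing.Theory Num.Theory.
Import numFieldNormedType.Exports.
Local Open Scope ring_scope.
Local Open Scope classical_set_scope.

Section Dot.
Variables (R : realType) (d : nat).
Implicit Types (u v w : 'rV[R]_d) (a b : R).

Lemma dotpC u v : dotp u v = dotp v u.
Proof. by rewrite /dotp; apply: eq_bigr => k _; rewrite mulrC. Qed.
Lemma dotpDl u v w : dotp (u + v) w = dotp u w + dotp v w.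
Proof. by rewrite /dotp -big_split; apply: eq_bigr => k _; rewrite !mxE mulrDl. Qed.
Lemma dotpZl a u v : dotp (a *: u) v = a * dotp u v.
Proof. by rewrite /dotp mulr_sumr; apply: eq_bigr => k _; rewrite !mxE mulrA. Qed.
Lemma dotpNl u v : dotp (- u) v = - dotp u v.
Proof. by rewrite -scaleN1r dotpZl mulN1r. Qed.
Lemma dotpBl u v w : dotp (u - v) w = dotp u w - dotp v w.
Proof. by rewrite dotpDl dotpNl. Qed.
Lemma dotpDr u v w : dotp u (v + w) = dotp u v + dotp u w.
Proof. by rewrite dotpC dotpDl !(dotpC u). Qed.
Lemma dotpZr a u v : dotp u (a *: v) = a * dotp u v.
Proof. by rewrite dotpC dotpZl dotpC. Qed.
Lemma dotpNr u v : dotp u (- v) = - dotp u v.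
Proof. by rewrite dotpC dotpNl dotpC. Qed.
Lemma dotpBr u v w : dotp u (v - w) = dotp u v - dotp u w.
Proof. by rewrite dotpDr dotpNr. Qed.
Lemma dotp0l v : dotp 0 v = 0.
Proof. by rewrite /dotp big1 // => k _; rewrite mxE mul0r. Qed.
Lemma dotp0r v : dotp v 0 = 0.
Proof. by rewrite dotpC dotp0l. Qed.
Lemma sqnorm_ge0 u : 0 <= sqnorm u.
Proof. by rewrite /sqnorm /dotp sumr_ge0 // => k _; rewrite -expr2 sqr_ge0. Qed.
Lemma sqnorm_eq0 u : sqnorm u = 0 -> u = 0.
Proof.
rewrite /sqnorm /dotp => /eqP; rewrite psumr_eq0; last by move=> k _; rewrite -expr2 sqr_ge0.
move=> /allP H; apply/rowP => k; rewrite mxE.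
have := H k (mem_index_enum k); rewrite -expr2 sqrf_eq0 => /eqP //.
Qed.
End Dot.

Lemma lim_le_aux (R : realType) (F : R -> R) (l B c : R) :
  F @ 0^' --> l -> (forall t, 0 < t -> t <= 1 -> F t <= B + c * t) -> l <= B.
Proof.
move=> Fl HF.
have H1 : F @ 0^'+ --> l.
  apply: cvg_trans Fl; apply: cvg_app; apply: within_subset => t /= t0.
  by rewrite gt_eqF.
have H2 : (fun t => B + c * t) @ 0^'+ --> B.
  rewrite -[X in _ --> X]addr0 -[X in _ + X](mulr0 c).
  apply: cvgD; first exact: cvg_cst.
  apply: cvgMr; exact: cvg_at_right_filter (cvg_id).
apply: (ler_cvg_to H1 H2).
near=> t; apply: HF; first by near: t; exact: nbhs_right_gt.
by near: t; apply: nbhs_right_le; exact: ltr01.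
Unshelve. all: end_near.
Qed.

Lemma sqnormD (R : realType) (d : nat) (u v : 'rV[R]_d) :
  sqnorm (u + v) = sqnorm u + 2 * dotp u v + sqnorm v.
Proof. rewrite /sqnorm dotpDl !dotpDr (dotpC v u); ring. Qed.
Lemma sqnormB (R : realType) (d : nat) (u v : 'rV[R]_d) :
  sqnorm (u - v) = sqnorm u - 2 * dotp u v + sqnorm v.
Proof. rewrite /sqnorm dotpDl !dotpDr !dotpNl !dotpNr (dotpC v u); ring. Qed.
Lemma sqnormZ (R : realType) (d : nat) (a : R) (u : 'rV[R]_d) :
  sqnorm (a *: u) = a ^+ 2 * sqnorm u.
Proof. rewrite /sqnorm dotpZl dotpZr; ring. Qed.

Lemma fo_ineq (R : realType) (d : nat) (f : 'rV[R]_d -> R) (g : 'rV[R]_d -> 'rV[R]_d)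
  (k : 'rV[R]_d -> R) (a b : R) (x y : 'rV[R]_d) :
  is_gradient f g -> convex_fun k -> (forall z, k z = a * sqnorm z + b * f z) ->
  k x + 2 * a * dotp x (y - x) + b * dotp (g x) (y - x) <= k y.
Proof.
move=> Hg Hk kE; set v := y - x.
have [dfx dfv] := Hg x.
have Hder : (fun h : R => h^-1 *: ((f \o shift x) (h *: v) - f x)) @ 0^' --> dotp (g x) v.
  rewrite -dfv -deriveE //; exact: (diff_derivable (v:=v) dfx).
have H2 : (fun t : R => b * (t^-1 *: ((f \o shift x) (t *: v) - f x))) @ 0^' --> b * dotp (g x) v.
  by apply: cvgMr.
have := lim_le_aux (B := k y - k x - 2 * a * dotp x v) (c := - a * sqnorm v) H2.
have key : forall t : R, 0 < t -> t <= 1 ->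
  b * (t^-1 *: ((f \o shift x) (t *: v) - f x)) <= k y - k x - 2 * a * dotp x v + - a * sqnorm v * t.
  move=> t t0 t1.
  have hc := Hk y x t (ltW t0) t1.
  have e : t *: y + (1 - t) *: x = t *: v + x.
    by rewrite /v; apply/rowP => i; rewrite !mxE; ring.
  rewrite e !kE sqnormD sqnormZ in hc. rewrite (dotpZl t v x) in hc.
  rewrite /= /shift /= -/v.
  have tn : t != 0 by rewrite gt_eqF.
  rewrite -(ler_pM2l t0).
  have -> : t * (b * (t^-1 *: (f (t *: v + x) - f x))) = b * (f (t *: v + x) - f x).
    by rewrite /GRing.scale /=; field.
  rewrite kE kE in hc *.
  rewrite (dotpC x v); lra.
move=> /(_ key); lra.
Qed.

Ltac dexp := rewrite /sqnorm ?dotpDl ?dotpDr ?dotpBl ?dotpBr ?dotpZl ?dotpZr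
  ?dotpNl ?dotpNr; do 4 rewrite ?dotpDl ?dotpDr ?dotpBl ?dotpBr ?dotpZl ?dotpZr ?dotpNl ?dotpNr
  ?dotpDl ?dotpDr ?dotpBl ?dotpBr ?dotpZl ?dotpZr ?dotpNl ?dotpNr.

Lemma sq_split (R : realType) (d : nat) (x y : 'rV[R]_d) :
  sqnorm y = sqnorm x + 2 * dotp x (y - x) + sqnorm (y - x).
Proof. by rewrite -sqnormD addrC subrK. Qed.

Lemma F_upper (R : realType) (d : nat) (mu L : R) (f : 'rV[R]_d -> R) g x y :
  in_F mu L f g -> f y <= f x + dotp (g x) (y - x) + L / 2 * sqnorm (y - x).
Proof.
move=> [Hg [Hc1 Hc2]].
have := fo_ineq (a := L / 2) (b := -1) x y Hg Hc1 (fun z => ltac:(ring)).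
rewrite (sq_split x y); lra.
Qed.

Lemma F_lower (R : realType) (d : nat) (mu L : R) (f : 'rV[R]_d -> R) g x y :
  in_F mu L f g -> f x + dotp (g x) (y - x) + mu / 2 * sqnorm (y - x) <= f y.
Proof.
move=> [Hg [Hc1 Hc2]].
have := fo_ineq (a := - (mu / 2)) (b := 1) x y Hg Hc2 (fun z => ltac:(ring)).
rewrite (sq_split x y); lra.
Qed.

Lemma le_by_id (R : realType) (a b c d : R) : a <= b -> d - c = b - a -> c <= d.
Proof. by move=> H E; rewrite -subr_ge0 E subr_ge0. Qed.

Lemma F_IC (R : realType) (d : nat) (mu L : R) (f : 'rV[R]_d -> R) g x y :
  0 < L -> mu <= 0 -> in_F mu L f g -> IC mu L x (g x) (f x) y (g y) (f y).
Proof.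
move=> L0 mu0 HF; rewrite /IC.
set L' := L - mu.
have L'0 : 0 < L' by rewrite /L'; lra.
set z := x - L'^-1 *: ((g x - g y) - mu *: (x - y)).
have Hlo := F_lower y z HF.
have Hup := F_upper x z HF.
move: Hlo Hup; rewrite /z; dexp.
rewrite ?(dotpC y x) ?(dotpC (g x) x) ?(dotpC (g y) x) ?(dotpC (g x) y) ?(dotpC (g y) y)
  ?(dotpC (g y) (g x)).
move=> Hlo Hup.
have Ln : L != 0 by rewrite gt_eqF.
have L'n : L' != 0 by rewrite gt_eqF.
have Hm : 1 - mu / L != 0.
  rewrite subr_eq0 eq_sym; apply/negP => /eqP H.
  have : mu / L <= 0 by rewrite pmulr_lle0 ?invr_gt0.
  lra.
apply: (le_by_id (le_trans Hlo Hup)).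
rewrite /L'; field.
by rewrite -/L' L'n Ln.
Qed.

Section DotLin.
Variables (R : realType) (d : nat) (G : 'rV[R]_d).
Definition dotl (v : 'rV[R]_d) : R := dotp G v.
Lemma dotl_lin : linear dotl.
Proof. by move=> a u v; rewrite /dotl dotpDr dotpZr. Qed.
HB.instance Definition _ := GRing.isLinear.Build R 'rV[R]_d R *:%R dotl dotl_lin.
End DotLin.

Lemma entry_le (R : realType) (d : nat) (v : 'rV[R]_d) k : `|v ord0 k| <= `|v|.
Proof.
have /mapP[j Hj ->] : `|v ord0 k| \in [seq `|v x.1 x.2| | x : 'I_1 * 'I_d].
  by apply/mapP; exists (ord0, k) => //=; rewrite mem_enum.
by rewrite [leRHS]/Num.norm /= mx_normrE; apply/bigmax_geP; right => /=; exists j.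
Qed.

Lemma abs_dotp_le (R : realType) (d : nat) (G v : 'rV[R]_d) :
  `|dotp G v| <= (\sum_(k < d) `|G ord0 k|) * `|v|.
Proof.
rewrite /dotp mulr_suml; apply: le_trans (ler_norm_sum _ _ _) _.
apply: ler_sum => k _; rewrite normrM; apply: ler_wpM2l => //; exact: entry_le.
Qed.

Lemma sqnorm_le (R : realType) (d : nat) (v : 'rV[R]_d) : sqnorm v <= d%:R * `|v| ^+ 2.
Proof.
rewrite /sqnorm /dotp; apply: le_trans (_ : _ <= \sum_(k < d) `|v| ^+ 2) _.
  apply: ler_sum => k _; rewrite -expr2 -real_normK ?num_real //.
  by rewrite lerXn2r ?nnegrE ?entry_le.
by rewrite sumr_const card_ord mulr_natl.
Qed.

Lemma cont_sum (R : realType) (T : topologicalType) (I : Type) (r : seq I) (Fn : I -> T -> R) :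
  (forall i, continuous (Fn i)) -> continuous (fun v => \sum_(i <- r) Fn i v).
Proof.
move=> H; elim: r => [|i r IH] x.
  under eq_fun do rewrite big_nil. exact: cvg_cst.
under eq_fun do rewrite big_cons.
exact: (cvgD (H i x) (IH x)).
Qed.

Lemma dotl_cont (R : realType) (d : nat) (G : 'rV[R]_d) : continuous (dotl G).
Proof.
apply: bounded_linear_continuous; apply/linear_boundedP.
near=> r => x.
apply: le_trans (abs_dotp_le G x) _.
apply: ler_wpM2r => //; near: r; apply: nbhs_pinfty_ge; exact: num_real.
Unshelve. all: end_near.
Qed.

Lemma diff_from_bound (R : realType) (d : nat) (f : 'rV[R]_d -> R) (x G : 'rV[R]_d) (C : R) :
  (forall v, `|f (v + x) - f x - dotp G v| <= C * sqnorm v) ->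
  differentiable f x /\ forall v, 'd f x v = dotp G v.
Proof.
move=> H.
have Ho : f \o shift x = cst (f x) + dotl G +o_ (0 : 'rV[R]_d) id.
  apply/eqaddoP => eps e0.
  set K := `|C| * d%:R.
  have K0 : 0 <= K by rewrite mulr_ge0.
  have dl : 0 < eps / (K + 1) by rewrite divr_gt0 // ltr_wpDl.
  change (\forall v \near (0 : 'rV[R]_d), `|(f \o shift x - (cst (f x) + dotl G)) v| <= eps * `|v|); apply/nbhs_norm0P; exists (eps / (K + 1)) => // v /= Hv'.
  have Hv : `|v| <= eps / (K + 1) by rewrite ltW.
  have -> : (f \o shift x - (cst (f x) + dotl G)) v = f (v + x) - f x - dotp G v.
    by rewrite /= opprD addrA.
  apply: le_trans (H v) _.
  have h1 : C * sqnorm v <= K * `|v| ^+ 2.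
    rewrite /K -mulrA; apply: le_trans (_ : C * sqnorm v <= `|C| * sqnorm v) _.
      by rewrite ler_wpM2r ?sqnorm_ge0 // real_ler_norm // num_real.
    by rewrite ler_wpM2l // sqnorm_le.
  apply: le_trans h1 _.
  have nv : 0 <= `|v| by [].
  have h2 : K * `|v| <= eps.
    apply: le_trans (_ : K * (eps / (K + 1)) <= eps).
      by rewrite ler_wpM2l.
    rewrite mulrA ler_pdivrMr ?ltr_wpDl //; nra.
  rewrite expr2 mulrA ler_wpM2r //.
have E := diff_unique (@dotl_cont R d G) Ho.
split; last by move=> v; rewrite E.
apply/diff_locallyP; rewrite E; split => //; exact: (@dotl_cont R d G).
Qed.

Lemma le_comb2 (R : realType) (a1 b1 a2 b2 c e t s : R) :
  a1 <= b1 -> a2 <= b2 -> 0 <= t -> 0 <= s ->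
  e - c = t * (b1 - a1) + s * (b2 - a2) -> c <= e.
Proof.
move=> h1 h2 t0 s0 E; rewrite -subr_ge0 E.
by apply: addr_ge0; apply: mulr_ge0 => //; rewrite subr_ge0.
Qed.

Lemma inF_of_bounds (R : realType) (d : nat) (f : 'rV[R]_d -> R) (g : 'rV[R]_d -> 'rV[R]_d) (m M : R) :
  (forall x v, f x + dotp (g x) v + m / 2 * sqnorm v <= f (x + v)) ->
  (forall x v, f (x + v) <= f x + dotp (g x) v + M / 2 * sqnorm v) ->
  in_F m M f g.
Proof.
move=> Hlo Hup; split; [|split].
- move=> x; apply: (diff_from_bound (C := `|m| / 2 + `|M| / 2)) => v.
  have h1 := Hlo x v; have h2 := Hup x v; rewrite (addrC v x).
  have s0 := sqnorm_ge0 v.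
  have hm : - (`|m| / 2 * sqnorm v) <= m / 2 * sqnorm v.
    have := ler_norm (- m); rewrite normrN => hmm.
    have : 0 <= (`|m| + m) * sqnorm v by rewrite mulr_ge0 //; lra.
    nra.
  have hM : M / 2 * sqnorm v <= `|M| / 2 * sqnorm v.
    have := ler_norm M => hmm.
    have : 0 <= (`|M| - M) * sqnorm v by rewrite mulr_ge0 //; lra.
    nra.
  have hm0 : 0 <= `|m| / 2 * sqnorm v by rewrite mulr_ge0.
  have hM0 : 0 <= `|M| / 2 * sqnorm v by rewrite mulr_ge0.
  rewrite ler_norml; apply/andP; split; lra.
- move=> x y t t0 t1; set z := t *: x + (1 - t) *: y.
  have H1 := Hup z (x - z); have H2 := Hup z (y - z).
  rewrite (addrC z (x - z)) subrK in H1; rewrite (addrC z (y - z)) subrK in H2.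
  apply: (le_comb2 H1 H2 t0 (_ : 0 <= 1 - t)); first by lra.
  rewrite /z; dexp.
  rewrite ?(dotpC y x) ?(dotpC (g (t *: x + (1 - t) *: y)) x) ?(dotpC (g (t *: x + (1 - t) *: y)) y).
  ring.
- move=> x y t t0 t1; set z := t *: x + (1 - t) *: y.
  have H1 := Hlo z (x - z); have H2 := Hlo z (y - z).
  rewrite (addrC z (x - z)) subrK in H1; rewrite (addrC z (y - z)) subrK in H2.
  apply: (le_comb2 H1 H2 t0 (_ : 0 <= 1 - t)); first by lra.
  rewrite /z; dexp.
  rewrite ?(dotpC y x) ?(dotpC (g (t *: x + (1 - t) *: y)) x) ?(dotpC (g (t *: x + (1 - t) *: y)) y).
  ring.
Qed.

Lemma coord_cont (R : realType) (d : nat) (k : 'I_d) :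
  continuous (fun y : 'rV[R]_d => y ord0 k).
Proof.
have -> : (fun y : 'rV[R]_d => y ord0 k) = dotl (delta_mx ord0 k).
  apply/funext => y; rewrite /dotl /dotp (bigD1 k) //= big1 ?addr0.
    by rewrite mxE !eqxx mul1r.
  by move=> j /negPf jk; rewrite mxE jk andbF mul0r.
exact: (@dotl_cont R d _).
Qed.

Lemma sqnorm_cont (R : realType) (d : nat) : continuous (@sqnorm R d).
Proof.
have -> : @sqnorm R d = (fun y : 'rV[R]_d => \sum_(k <- index_enum 'I_d) y ord0 k * y ord0 k) by [].
apply: (@cont_sum R 'rV[R]_d 'I_d (index_enum 'I_d) (fun k (y : 'rV[R]_d) => y ord0 k * y ord0 k)) => k x.
exact: (cvgM (@coord_cont R d k x) (@coord_cont R d k x)).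
Qed.

Lemma norm_le_sq (R : realType) (d : nat) (y : 'rV[R]_d) : `|y| <= 1 + sqnorm y.
Proof.
rewrite [leLHS]/Num.norm /= mx_normrE; apply: bigmax_le.
  by rewrite addr_ge0 ?sqnorm_ge0.
move=> [i k] _ /=; rewrite (ord1 i).
have h1 : `|y ord0 k| ^+ 2 <= sqnorm y.
  rewrite /sqnorm /dotp (bigD1 k) //= -expr2 real_normK ?num_real //.
  by rewrite lerDl sumr_ge0 // => j _; rewrite -expr2 sqr_ge0.
have h2 : `|y ord0 k| <= 1 + `|y ord0 k| ^+ 2.
  have := normr_ge0 (y ord0 k); nra.
lra.
Qed.

Lemma dotp_sqnorm (R : realType) (d : nat) (u : 'rV[R]_d) : dotp u u = sqnorm u.
Proof. by []. Qed.

Lemma le_limit_aux (R : realType) (A B : R) :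
  (forall t, 0 < t -> t < 1 -> (1 - t) * A <= B) -> A <= B.
Proof.
move=> H; rewrite leNgt; apply/negP => BA.
have h2 := H (1/2) ltac:(lra) ltac:(lra).
have A0 : 0 < A by nra.
have tA : 0 < (A - B) / (2 * A) by apply: divr_gt0; lra.
have t1 : (A - B) / (2 * A) < 1.
  by rewrite ltr_pdivrMr; lra.
have := H _ tA t1.
have -> : (1 - (A - B) / (2 * A)) * A = (A + B) / 2.
  by field; rewrite gt_eqF.
lra.
Qed.

Section Interp.
Variables (R : realType) (d : nat) (mu L : R) (N : nat).
Variables (X G : nat -> 'rV[R]_d) (F : nat -> R).
Hypothesis L0 : 0 < L.
Hypothesis mu0 : mu <= 0.
Hypothesis HIC : forall i j, (i <= N)%N -> (j <= N)%N ->
  IC mu L (X i) (G i) (F i) (X j) (G j) (F j).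

Definition Lp := L - mu.
Lemma Lp0 : 0 < Lp. Proof. move: L0 mu0; rewrite /Lp; lra. Qed.
Lemma Lpn : Lp != 0. Proof. by rewrite gt_eqF // Lp0. Qed.
Lemma Ln : L != 0. Proof. by rewrite gt_eqF. Qed.

Definition gh i := G i - mu *: X i.
Definition fh i := F i - mu / 2 * sqnorm (X i).
Definition q i (y : 'rV[R]_d) := - fh i + dotp (X i) y + sqnorm (y - gh i) / (2 * Lp).
Fixpoint hm n y := if n is n'.+1 then Num.max (hm n' y) (q n y) else q 0 y.
Definition hmax y := hm N y.

Lemma hm_ge n i y : (i <= n)%N -> q i y <= hm n y.
Proof.
elim: n => [|n IH] /=; first by rewrite leqn0 => /eqP ->.
rewrite leq_eqVlt => /orP [/eqP -> | Hi]; first by rewrite le_max lexx orbT.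
by rewrite le_max IH.
Qed.

Lemma hm_le n y B : (forall i, (i <= n)%N -> q i y <= B) -> hm n y <= B.
Proof.
elim: n => [|n IH] H /=; first exact: H.
rewrite ge_max H // andbT; apply: IH => i Hi; apply: H; exact: leqW.
Qed.

Lemma q_ic i j : (i <= N)%N -> (j <= N)%N -> q j (gh i) <= q i (gh i).
Proof.
move=> Hi Hj; have := HIC Hj Hi; rewrite /IC /q /gh /fh.
move=> H; apply: (le_by_id H).
dexp.
rewrite ?(dotpC (X i) (X j)) ?(dotpC (G i) (X j)) ?(dotpC (G j) (X j))
  ?(dotpC (G i) (X i)) ?(dotpC (G j) (X i)) ?(dotpC (G j) (G i)).
have Hm : 1 - mu / L != 0.
  rewrite subr_eq0 eq_sym; apply/negP => /eqP H1.
  have : mu / L <= 0 by rewrite pmulr_lle0 ?invr_gt0.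
  lra.
rewrite /Lp; field.
by rewrite -/Lp Lpn Ln.
Qed.

Lemma hmax_gh i : (i <= N)%N -> hmax (gh i) = q i (gh i).
Proof.
move=> Hi; apply/eqP; rewrite eq_le hm_ge // andbT.
by apply: hm_le => j Hj; apply: q_ic.
Qed.

Lemma q_sc j (y ys : 'rV[R]_d) t :
  q j (ys + t *: (y - ys)) =
  (1 - t) * q j ys + t * q j y - t * (1 - t) * sqnorm (y - ys) / (2 * Lp).
Proof.
rewrite /q; dexp.
rewrite ?(dotpC y ys) ?(dotpC (gh j) ys) ?(dotpC (gh j) y) ?(dotpC y (X j))
  ?(dotpC ys (X j)).
field; exact: Lpn.
Qed.

Definition kx (x y : 'rV[R]_d) := hmax y - dotp x y.

Lemma SM_of_min x ys : (forall y, kx x ys <= kx x y) ->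
  forall y, kx x ys + sqnorm (y - ys) / (2 * Lp) <= kx x y.
Proof.
move=> Hmin y.
set s := sqnorm (y - ys).
suff : s / (2 * Lp) <= kx x y - kx x ys by lra.
apply: le_limit_aux => t t0 t1.
have H1 := Hmin (ys + t *: (y - ys)).
have H2 : hmax (ys + t *: (y - ys)) <=
    (1 - t) * hmax ys + t * hmax y - t * (1 - t) * s / (2 * Lp).
  apply: hm_le => j Hj; rewrite q_sc.
  have := hm_ge ys Hj; have := hm_ge y Hj.
  rewrite -/(hmax ys) -/(hmax y) -/s => A B.
  have : (1 - t) * q j ys <= (1 - t) * hmax ys by rewrite ler_pM2l; lra.
  have : t * q j y <= t * hmax y by rewrite ler_pM2l.
  lra.
move: H1; rewrite /kx dotpDr dotpZr dotpBr => H1.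
have : t * ((1 - t) * (s / (2 * Lp))) <= t * (hmax y - dotp x y - (hmax ys - dotp x ys)).
  have -> : t * ((1 - t) * (s / (2 * Lp))) = t * (1 - t) * s / (2 * Lp) by field; exact: Lpn.
  lra.
by rewrite ler_pM2l.
Qed.

Lemma q_cont i : continuous (q i).
Proof.
have -> : q i = fun y => - fh i + dotl (X i) y +
    (sqnorm y - 2 * dotl (gh i) y + sqnorm (gh i)) / (2 * Lp).
  by apply/funext => y; rewrite /q /dotl sqnormB (dotpC y).
move=> y.
have c1 := @dotl_cont R d (X i) y.
have c2 := @dotl_cont R d (gh i) y.
have c3 := @sqnorm_cont R d y.
exact: (cvgD (cvgD (cvg_cst (- fh i)) c1) (cvgMl (cvgD (cvgB c3 (cvgMr c2)) (cvg_cst _)))).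
Qed.

Lemma hm_cont n : continuous (hm n).
Proof.
elim: n => [|n IH] /=; first exact: q_cont.
exact: (max_fun_continuous IH (@q_cont n.+1)).
Qed.

Lemma kx_cont x : continuous (kx x).
Proof.
move=> y; exact: (cvgB (@hm_cont N y) (@dotl_cont R d x y)).
Qed.

Lemma ex_min x : exists ys, forall y, kx x ys <= kx x y.
Proof.
set k := kx x.
set w := (X 0 - x) - Lp^-1 *: gh 0.
set K1 := fh 0 + Lp * sqnorm w.
have key : forall y, sqnorm y / (4 * Lp) - K1 <= k y.
  move=> y; apply: (le_trans _ (_ : q 0 y - dotp x y <= _)); last first.
    by rewrite /k /kx lerB // hm_ge.
  rewrite -subr_ge0.
  have -> : q 0 y - dotp x y - (sqnorm y / (4 * Lp) - K1) =
      sqnorm (y + (2 * Lp) *: w) / (4 * Lp) + sqnorm (gh 0) / (2 * Lp).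
    rewrite /q /K1 /w; dexp.
    rewrite ?(dotpC (X 0) y) ?(dotpC (gh 0) y) ?(dotpC x y) ?(dotpC (X 0) x)
      ?(dotpC (gh 0) (X 0)) ?(dotpC (gh 0) x).
    field; exact: Lpn.
  by apply: addr_ge0; apply: divr_ge0; rewrite ?sqnorm_ge0 // mulr_ge0 // ltW // Lp0.
set M0 := 4 * Lp * (k 0 + K1).
set A := [set y | k y <= k 0].
have A0 : A !=set0 by exists 0; rewrite /A /=.
have Abd : forall y, A y -> sqnorm y <= M0.
  move=> y; rewrite /A /= => Hy; have := key y.
  have L4 : 0 < 4 * Lp by rewrite mulr_gt0 // Lp0.
  move=> Hk; rewrite /M0 -ler_pdivrMl //; lra.
have Acomp : compact A.
  apply: bounded_closed_compact.
    rewrite /= /bounded_near; near=> M => y /Abd Hy /=.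
    apply: le_trans (norm_le_sq y) _.
    have : 1 + M0 <= M by near: M; apply: nbhs_pinfty_ge; exact: num_real.
    lra.
  have -> : A = k @^-1` [set r | r <= k 0] by [].
  apply: preimage_closed; last exact: closed_le.
  move=> y _; exact: kx_cont.
have [c Ac Hc] := compact_EVT_min A0 Acomp (continuous_subspaceT (@kx_cont x)).
exists c => y.
have Hc0 : k c <= k 0 by apply: Hc; rewrite inE /A /=.
case: (lerP (k y) (k 0)) => Hy.
  by apply: Hc; rewrite inE.
by apply: le_trans Hc0 (ltW Hy).
Unshelve. all: end_near.
Qed.

Definition ysel x := projT1 (cid (ex_min x)).
Lemma yselP x y : kx x (ysel x) + sqnorm (y - ysel x) / (2 * Lp) <= kx x y.
Proof. apply: SM_of_min; exact: (projT2 (cid (ex_min x))). Qed.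

Definition fI x := mu / 2 * sqnorm x - kx x (ysel x).
Definition gI x := ysel x + mu *: x.

Lemma fI_ge x y : mu / 2 * sqnorm x - kx x y <= fI x.
Proof.
rewrite /fI; have := yselP x y.
have : 0 <= sqnorm (y - ysel x) / (2 * Lp) by rewrite divr_ge0 ?sqnorm_ge0 // mulr_ge0 // ltW // Lp0.
lra.
Qed.

Lemma fI_lower x v : fI x + dotp (gI x) v + mu / 2 * sqnorm v <= fI (x + v).
Proof.
apply: le_trans (fI_ge (x + v) (ysel x)).
rewrite /fI /gI /kx sqnormD dotpDl dotpDl dotpZl (dotpC v (ysel x)).
lra.
Qed.

Lemma amgm (u w : 'rV[R]_d) : dotp u w - sqnorm w / (2 * Lp) <= Lp / 2 * sqnorm u.
Proof.
have H := sqnorm_ge0 (Lp *: u - w).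
have : 0 <= sqnorm (Lp *: u - w) / (2 * Lp) by rewrite divr_ge0 // mulr_ge0 // ltW // Lp0.
have -> : sqnorm (Lp *: u - w) / (2 * Lp) = Lp / 2 * sqnorm u - dotp u w + sqnorm w / (2 * Lp).
  rewrite sqnormB sqnormZ dotpZl; field; exact: Lpn.
lra.
Qed.

Lemma fI_upper x v : fI (x + v) <= fI x + dotp (gI x) v + L / 2 * sqnorm v.
Proof.
set y' := ysel (x + v).
have H := yselP x y'.
have A := amgm v (y' - ysel x).
rewrite /fI -/y' /gI /kx in H *.
rewrite dotpBr (dotpC v y') (dotpC v (ysel x)) in A.
rewrite (sqnormD x v) (dotpDl x v y') (dotpDl (ysel x)) dotpZl (dotpC v y').
move: H A; rewrite /kx /Lp; lra.
Qed.

Lemma fI_bound c : (forall i, (i <= N)%N -> c <= F i - 1 / (2 * L) * sqnorm (G i)) ->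
  forall x, c <= fI x.
Proof.
move=> Hc x; apply: (le_trans _ (fI_ge x ((- mu) *: x))).
suff : hmax ((- mu) *: x) <= mu / 2 * sqnorm x + dotp x ((- mu) *: x) - c.
  rewrite /kx; lra.
apply: hm_le => i Hi.
have E : mu / 2 * sqnorm x + dotp x ((- mu) *: x) - q i ((- mu) *: x)
   - (F i - 1 / (2 * L) * sqnorm (G i))
   = - mu / (2 * L * Lp) * sqnorm (L *: (x - X i) + G i).
  rewrite /q /gh /fh; dexp.
  rewrite ?(dotpC (X i) x) ?(dotpC (G i) x) ?(dotpC (G i) (X i)).
  rewrite /Lp; field.
  by rewrite -/Lp Lpn Ln.
have : 0 <= - mu / (2 * L * Lp) * sqnorm (L *: (x - X i) + G i).
  apply: mulr_ge0; last exact: sqnorm_ge0.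
  apply: divr_ge0; first by rewrite oppr_ge0.
  by rewrite !mulr_ge0 // ltW // ?Lp0.
have := Hc i Hi.
lra.
Qed.

Lemma ysel_X i : (i <= N)%N -> ysel (X i) = gh i.
Proof.
move=> Hi.
have Hmin : forall y, kx (X i) (gh i) <= kx (X i) y.
  move=> y; rewrite /kx hmax_gh //.
  apply: le_trans (_ : q i y - dotp (X i) y <= _); last first.
    by rewrite lerB // hm_ge.
  rewrite /q; have : 0 <= sqnorm (y - gh i) / (2 * Lp).
    by rewrite divr_ge0 ?sqnorm_ge0 // mulr_ge0 // ltW // Lp0.
  have -> : sqnorm (gh i - gh i) = 0 by rewrite subrr /sqnorm dotp0l.
  lra.
have H := yselP (X i) (gh i).
have H2 := Hmin (ysel (X i)).
have : sqnorm (gh i - ysel (X i)) / (2 * Lp) <= 0 by lra.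
rewrite pmulr_lle0 ?invr_gt0 ?mulr_gt0 ?Lp0 // => H3.
have : sqnorm (gh i - ysel (X i)) = 0.
  by apply/eqP; rewrite eq_le H3 sqnorm_ge0.
move/sqnorm_eq0/eqP; rewrite subr_eq0 => /eqP //.
Qed.

Lemma fI_X i : (i <= N)%N -> fI (X i) = F i.
Proof.
move=> Hi; rewrite /fI ysel_X // /kx hmax_gh // /q /fh.
have -> : sqnorm (gh i - gh i) = 0 by rewrite subrr /sqnorm dotp0l.
rewrite -dotp_sqnorm; lra.
Qed.

Lemma gI_X i : (i <= N)%N -> gI (X i) = G i.
Proof. by move=> Hi; rewrite /gI ysel_X // /gh subrK. Qed.
End Interp.

Lemma sqnormN (R : realType) (d : nat) (u : 'rV[R]_d) : sqnorm (- u) = sqnorm u.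
Proof. by rewrite /sqnorm dotpNl dotpNr opprK. Qed.

Lemma ex_argmin (R : realType) (c : nat -> R) n :
  exists i0, (i0 <= n)%N /\ forall i, (i <= n)%N -> c i0 <= c i.
Proof.
elim: n => [|n [i0 [Hi0 IH]]].
  by exists 0%N; split => // i; rewrite leqn0 => /eqP ->.
case: (lerP (c i0) (c n.+1)) => H.
  exists i0; split; first exact: leqW.
  move=> i; rewrite leq_eqVlt => /orP [/eqP -> // | Hi]; exact: IH.
exists n.+1; split => // i; rewrite leq_eqVlt => /orP [/eqP -> // | Hi].
by apply: le_trans (ltW H) (IH _ Hi).
Qed.

Lemma descent_bound (R : realType) (d : nat) (L a : R) (x g : 'rV[R]_d) (fx fz : R) :
  0 < L -> fz <= fx + dotp g (x - L^-1 *: g - x) + L / 2 * sqnorm (x - L^-1 *: g - x) ->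
  fz <= fx - 1 / (2 * L) * sqnorm g.
Proof.
have e : x - L^-1 *: g - x = - (L^-1 *: g) by rewrite addrAC subrr add0r.
move=> L0; rewrite e dotpNr dotpZr sqnormN sqnormZ -/(sqnorm g).
have -> : L / 2 * (L^-1 ^+ 2 * sqnorm g) = L^-1 * sqnorm g / 2.
  by field; rewrite gt_eqF.
have -> : 1 / (2 * L) * sqnorm g = L^-1 * sqnorm g / 2.
  by field; rewrite gt_eqF.
lra.
Qed.

Lemma fun_sub_pep (R : realType) (d : nat) (L mu Delta : R) (N : nat) (h : nat -> R) :
  0 < L -> mu <= 0 ->
  values_fun d mu L Delta N h `<=` values_pep d mu L Delta N h.
Proof.
move=> L0 mu0 r [f [g [x [xs [HF Hmin Hrec HD Hr]]]]].
exists (fun o => if o is Some i then x i else xs),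
  (fun o => g (if o is Some i then x i else xs)),
  (fun o => f (if o is Some i then x i else xs)).
split => //.
- by move=> [i|] [j|] _ _ /=; exact: F_IC.
- move=> i Hi /=.
  have H1 := Hmin (x i - L^-1 *: g (x i)).
  have H2 := F_upper (x i) (x i - L^-1 *: g (x i)) HF.
  have := descent_bound 0 L0 H2.
  lra.
Qed.

Lemma pep_sub_fun (R : realType) (d : nat) (L mu Delta : R) (N : nat) (h : nat -> R) :
  0 < L -> mu <= 0 ->
  values_pep d mu L Delta N h `<=` values_fun d mu L Delta N h.
Proof.
move=> L0 mu0 r [X' [G' [F' [HIC' Hrec Hlow HD Hr]]]].
set X := fun i => X' (Some i).
set G := fun i => G' (Some i).
set F := fun i => F' (Some i).
have HIC : forall i j, (i <= N)%N -> (j <= N)%N -> IC mu L (X i) (G i) (F i) (X j) (G j) (F j).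
  by move=> i j Hi Hj; exact: (HIC' (Some i) (Some j) Hi Hj).
set c := fun i => F i - 1 / (2 * L) * sqnorm (G i).
have [i0 [Hi0 Hc]] := ex_argmin c N.
set f := fI N X G F L0 mu0.
set g := gI N X G F L0 mu0.
set xs := X i0 - L^-1 *: G i0.
have fX : forall i, (i <= N)%N -> f (X i) = F i by move=> i Hi; exact: fI_X.
have gX : forall i, (i <= N)%N -> g (X i) = G i by move=> i Hi; exact: gI_X.
have fxs : f xs <= c i0.
  have := fI_upper N X G F L0 mu0 (X i0) (xs - X i0).
  rewrite -/f -/g (addrC (X i0) (xs - X i0)) subrK fX // gX // => H.
  exact: (descent_bound 0 L0 H).
have fge : forall y, c i0 <= f y by move=> y; apply: fI_bound => i Hi; exact: Hc.
exists f, g, X, xs; split.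
- apply: inF_of_bounds.
  + move=> x v; exact: fI_lower.
  + move=> x v; exact: fI_upper.
- by move=> y; apply: le_trans fxs (fge y).
- move=> i Hi; rewrite /X Hrec //; congr (_ - _ *: _); exact: (esym (gX i (ltnW Hi))).
- rewrite fX //.
  have := fge xs; have := Hlow i0 Hi0; rewrite -/(c i0) /c /F.
  move: HD; rewrite -/(F 0%N); lra.
- rewrite Hr /min_upto gX //; congr (\big[_/_]_(_ < _) _).
  apply/funext => i; rewrite (gX i) // -ltnS; exact: ltn_ord.
Qed.

Theorem propositionC2 (R : realType) (d : nat) (L mu Delta : R) (N : nat)
  (h : nat -> R) :
  0 < L -> mu <= 0 -> 0 < Delta -> (1 <= N)%N ->
  ereal_sup [set r%:E | r in values_fun d mu L Delta N h] =
  ereal_sup [set r%:E | r in values_pep d mu L Delta N h].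
Proof.
move=> L0 mu0 D0 N1.
have -> : values_fun d mu L Delta N h = values_pep d mu L Delta N h.
  by apply/seteqP; split; [exact: fun_sub_pep | exact: pep_sub_fun].
by [].
Qed.
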